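(* Let $G$ be a graph of order $n$ with no isolated vertices such that $\gamma_{\rm gr}^t(G)=n$, and let $S=(v_1,\ldots,v_n)$ be a total dominating sequence of $G$ of length $n$. If $x$ and $y$ are vertices of $G$ such that $x$ footprints $y$ with respect to $S$, then $y$ also footprints $x$ with respect to $S$.
   Context: All graphs are finite, simple, without isolated vertices. $N(v)$ denotes the open neighborhood of $v$. A sequence $S=(v_1,\ldots,v_k)$ of distinct vertices of $G$ is a legal (open neighborhood) sequence if $N(v_i)\setminus \bigcup_{j=1}^{i-1} N(v_j)\neq\emptyset$ for every $i\in\{2,\ldots,k\}$; it is a total dominating sequence if moreover $\{v_1,\ldots,v_k\}$ is a total dominating set of $G$ (every vertex has a neighbor in it). For a legal sequence $S$, the vertex $v_i$ footprints every vertex $u \in N(v_i)\setminus \bigcup_{j=1}^{i-1} N(v_j)$. The Grundy total domination number $\gamma_{\rm gr}^t(G)$ is the maximum length of a total dominating sequence of $G$. *)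

(* Defs.v *)
From mathcomp Require Import all_boot.
Set Implicit Arguments. Unset Strict Implicit. Unset Printing Implicit Defensive.

Definition simple_graph (T : finType) (e : rel T) : Prop :=
  symmetric e /\ irreflexive e.

Definition no_isolated (T : finType) (e : rel T) : Prop :=
  forall v : T, exists u : T, e v u.

Definition N (T : finType) (e : rel T) (v : T) : {set T} := [set u | e v u].

Definition Nunion (T : finType) (e : rel T) (p : seq T) : {set T} :=
  \bigcup_(w <- p) N e w.

Definition legal_seq (T : finType) (e : rel T) (s : seq T) : Prop :=
  uniq s /\
  forall (p q : seq T) (v : T), s = p ++ v :: q -> p <> [::] ->
    exists u, u \in N e v :\: Nunion e p.

Definition total_dominating (T : finType) (e : rel T) (s : seq T) : Prop :=
  forall x : T, exists2 w, w \in s & e x w.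

Definition total_dominating_seq (T : finType) (e : rel T) (s : seq T) : Prop :=
  legal_seq e s /\ total_dominating e s.

Definition grundy_total_eq (T : finType) (e : rel T) (k : nat) : Prop :=
  (exists s, total_dominating_seq e s /\ size s = k) /\
  (forall s, total_dominating_seq e s -> size s <= k).

Definition footprints (T : finType) (e : rel T) (s : seq T) (x y : T) : Prop :=
  exists (p q : seq T), s = p ++ x :: q /\ y \in N e x :\: Nunion e p.

(* Main.v *)
Require Import Defs.
From mathcomp Require Import all_boot.

Lemma surj_inj (T : finType) (f : T -> T) :
  (forall w, exists z, f z = w) -> injective f.
Proof.
move=> Hs0.
have Hs : forall w, exists z, f z == w by move=> w; have [z <-] := Hs0 w; exists z.
pose g w := xchoose (Hs w).
have fg : cancel g f by move=> w; apply/eqP; exact: (xchooseP (Hs w)).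
have [g' gg' g'g] := injF_bij (can_inj fg).
have fe : forall z, f z = g' z.
  by move=> z; rewrite -{1}(g'g z) fg.
move=> a b; rewrite !fe => H.
by rewrite -(g'g a) H g'g.
Qed.

Theorem mainTheorem4 (T : finType) (e : rel T) (s : seq T) (x y : T) :
  simple_graph e -> no_isolated e ->
  grundy_total_eq e #|T| ->
  total_dominating_seq e s -> size s = #|T| ->
  footprints e s x y -> footprints e s y x.
Proof.
move=> [esym eirr] noiso _ [[us legal] tds] sz [p [q [Es Hy]]].
have ins : forall z, z \in s.
  move=> z.
  have Hc : #|s| = #|predT : pred T| by rewrite (card_uniqP us) sz.
  have := subset_cardP Hc; rewrite subset_predT => /(_ isT) H.
  by rewrite H.
pose phi z := nth x s (find (e z) s).
have hasz : forall z, has (e z) s.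
  by move=> z; have [w ws ew] := tds z; apply/hasP; exists w.
have findlt : forall z, find (e z) s < size s by move=> z; rewrite -has_find.
have ephi : forall z, e z (phi z) by move=> z; exact: nth_find.
have idxphi : forall z, index (phi z) s = find (e z) s.
  by move=> z; rewrite /phi index_uniq.
have bef : forall z j, j < find (e z) s -> e z (nth x s j) = false.
  by move=> z j; apply: before_find.
have nthidx : forall z, nth x s (index z s) = z by move=> z; rewrite nth_index.
have findk : forall z k, e z (nth x s k) ->
    (forall j, j < k -> e z (nth x s j) = false) -> find (e z) s = k.
  move=> z k H1 H2; apply/eqP; rewrite eqn_leq; apply/andP; split.
    by rewrite leqNgt; apply/negP => /bef; rewrite H1.
  by rewrite leqNgt; apply/negP => /H2; rewrite nth_find.
have intake : forall w k, w \in take k s -> exists2 j, j < k & w = nth x s j.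
  move=> w k /(nthP x) [j jlt <-].
  have jk : j < k by apply: (leq_trans jlt); rewrite size_take; case: ifP => // /negbT; rewrite -leqNgt.
  by exists j => //; rewrite nth_take.
have Ntake : forall w k u, k <= size s -> u \in N e w :\: Nunion e (take k s) ->
    e w u /\ forall j, j < k -> e u (nth x s j) = false.
  move=> w k u ks; rewrite in_setD inE => /andP [Hn Hw]; split => // j jk.
  apply/negP => eu; move: Hn; rewrite /Nunion.
  apply/negP; rewrite negbK bigcup_seq; apply/bigcupP.
  exists (nth x s j); first by rewrite -(nth_take _ jk); apply: mem_nth; rewrite size_take_min; apply: (leq_trans jk); rewrite leq_min leqnn ks.
  by rewrite inE esym.
have surj : forall w, exists z, phi z = w.
  move=> w.
  have wi := ins w.
  set k := index w s.
  have Es' : s = take k s ++ w :: drop k.+1 s.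
    by rewrite -{1}(nthidx w) -/k -drop_nth ?index_mem // cat_take_drop.
  case: (posnP k) => [k0|kpos].
    have [z ewz] := noiso w.
    exists z; rewrite /phi (findk z 0) // -k0 nthidx //; by rewrite esym.
  have [u Hu] : exists u, u \in N e w :\: Nunion e (take k s).
    apply: (legal _ _ _ Es') => /(congr1 size); rewrite size_take index_mem wi /=.
    by move=> k0; rewrite k0 in kpos.
  have kle : k <= size s by apply: ltnW; rewrite index_mem.
  have [ewu Hj] := Ntake _ _ _ kle Hu.
  by exists u; rewrite /phi (findk u k) /k ?nthidx // esym.
have pinj := @surj_inj _ phi surj.
have dec : forall z, index (phi (phi z)) s <= index z s.
  move=> z; rewrite idxphi leqNgt; apply/negP => /bef.
  by rewrite nthidx esym ephi.
have idxinj : forall a b, index a s = index b s -> a = b.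
  by move=> a b H; rewrite -(nthidx a) H nthidx.
have psi : forall z, phi (phi z) = z.
  move=> z; move: {2}(index z s) (leqnn (index z s)) => m.
  elim: m z => [|m IH] z hz.
    apply: idxinj; have := dec z; move: hz; rewrite !leqn0 => /eqP -> /eqP.
    by rewrite subn0.
  case: (ltngtP (index (phi (phi z)) s) (index z s)) => H.
  - apply: (pinj); apply: (pinj); apply: IH.
    by rewrite -ltnS (leq_trans H hz).
  - by move: (dec z); rewrite leqNgt H.
  - exact: idxinj.
have phiy : phi y = x.
  move: Hy; rewrite in_setD inE => /andP [Hn exy].
  rewrite /phi (findk y (size p)).
  - by rewrite Es nth_cat ltnn subnn.
  - by rewrite Es nth_cat ltnn subnn esym.
  move=> j jp; apply/negP => eyj; move/negP: Hn; apply; rewrite /Nunion bigcup_seq.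
  apply/bigcupP; exists (nth x s j); first by rewrite Es nth_cat jp mem_nth.
  by rewrite inE esym.
have phix : phi x = y by rewrite -phiy psi.
move: Hy; rewrite in_setD inE => /andP [_ exy].
have yi := ins y.
exists (take (index y s) s), (drop (index y s).+1 s); split.
  by rewrite -{2}(nthidx y) -drop_nth ?index_mem // cat_take_drop.
rewrite in_setD inE esym exy andbT; apply/negP; rewrite /Nunion bigcup_seq => /bigcupP [w wi].
rewrite inE => ewx.
have [j jk wj] := intake _ _ wi.
rewrite -phix idxphi in jk.
by have := bef x j jk; rewrite -wj esym ewx.
Qed.
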